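(* With the matrices defined in the context, $\mathbf{A_N}$ is invertible and $$\mathbf{A_N}^{-1}=(\mathbf{B}^T\mathbf{B})^\dagger+(\mathbf{C}^T\mathbf{C})^\dagger .$$
   Context: Fix an integer $n\ge 2$ and set $h=1/n$. Let $I_m$ denote the $m\times m$ identity matrix and $\otimes$ the Kronecker product. Let $\mathrm{B}\in\mathbb{R}^{n\times(n-1)}$ be $\mathrm{B}=\frac1h M$, where $M_{i,i}=1$ and $M_{i+1,i}=-1$ for $1\le i\le n-1$, all other entries $0$. Define $\mathrm{B}^u_x=I_n\otimes \mathrm{B}$, $\mathrm{B}^v_y=\mathrm{B}\otimes I_n$, $\mathrm{B}^q_x=I_{n-1}\otimes\mathrm{B}$, $\mathrm{B}^q_y=\mathrm{B}\otimes I_{n-1}$. Let $\mathbf{B}=\begin{bmatrix}-\mathrm{B}^u_x & -\mathrm{B}^v_y\end{bmatrix}\in\mathbb{R}^{n^2\times 2n(n-1)}$ and $\mathbf{C}=\begin{bmatrix}-(\mathrm{B}^q_y)^T & (\mathrm{B}^q_x)^T\end{bmatrix}\in\mathbb{R}^{(n-1)^2\times 2n(n-1)}$, and let $\mathbf{A_N}=\mathbf{B}^T\mathbf{B}+\mathbf{C}^T\mathbf{C}$ (the Neumann velocity Laplacian). The superscript $\dagger$ denotes the Moore–Penrose pseudoinverse. *)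

(* Defs.v *)
From HB Require Import structures.
From mathcomp Require Import all_boot all_order all_algebra.
From mathcomp Require Import reals.
From Stdlib Require Import ClassicalEpsilon.
Set Implicit Arguments. Unset Strict Implicit. Unset Printing Implicit Defensive.
Import Order.TTheory GRing.Theory Num.Theory.
Local Open Scope ring_scope.

(* index decoding for the Kronecker product: k = a * p + b  <-> (a, b) *)
Lemma kron_div_lt (m p : nat) (k : 'I_(m * p)) : (k %/ p < m)%N.
Proof.
case: k => k /= hk; case: p hk => [|p] hk; first by rewrite muln0 in hk.
by rewrite ltn_divLR.
Qed.

Lemma kron_mod_lt (m p : nat) (k : 'I_(m * p)) : (k %% p < p)%N.
Proof.
case: k => k /= hk; case: p hk => [|p] hk; first by rewrite muln0 in hk.
by rewrite ltn_mod.
Qed.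

Definition kdiv (m p : nat) (k : 'I_(m * p)) : 'I_m := Ordinal (kron_div_lt k).
Definition kmod (m p : nat) (k : 'I_(m * p)) : 'I_p := Ordinal (kron_mod_lt k).

Definition kron (R : pzRingType) (m1 n1 m2 n2 : nat)
  (A : 'M[R]_(m1, n1)) (B : 'M[R]_(m2, n2)) : 'M[R]_(m1 * m2, n1 * n2) :=
  \matrix_(i, j) (A (kdiv i) (kdiv j) * B (kmod i) (kmod j)).

Definition is_mp_pinv (R : realFieldType) (m n : nat)
  (A : 'M[R]_(m, n)) (X : 'M[R]_(n, m)) : Prop :=
  [/\ A *m X *m A = A, X *m A *m X = X,
      (A *m X)^T = A *m X & (X *m A)^T = X *m A].

Definition mp_pinv (R : realFieldType) (m n : nat) (A : 'M[R]_(m, n)) : 'M[R]_(n, m) :=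
  epsilon (inhabits 0) (is_mp_pinv A).

Definition Mmat (R : realType) (n : nat) : 'M[R]_(n, n.-1) :=
  \matrix_(i, j) (if nat_of_ord i == nat_of_ord j then 1
                  else if nat_of_ord i == (nat_of_ord j).+1 then -1 else 0).

Definition hstep (R : realType) (n : nat) : R := 1 / n%:R.

Definition Bmat (R : realType) (n : nat) : 'M[R]_(n, n.-1) :=
  (hstep R n)^-1 *: Mmat R n.

Definition Bux (R : realType) (n : nat) : 'M[R]_(n * n, n * n.-1) :=
  kron (1%:M : 'M[R]_n) (Bmat R n).
Definition Bvy (R : realType) (n : nat) : 'M[R]_(n * n, n.-1 * n) :=
  kron (Bmat R n) (1%:M : 'M[R]_n).
Definition Bqx (R : realType) (n : nat) : 'M[R]_(n.-1 * n, n.-1 * n.-1) :=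
  kron (1%:M : 'M[R]_n.-1) (Bmat R n).
Definition Bqy (R : realType) (n : nat) : 'M[R]_(n * n.-1, n.-1 * n.-1) :=
  kron (Bmat R n) (1%:M : 'M[R]_n.-1).

Definition boldB (R : realType) (n : nat) : 'M[R]_(n * n, n * n.-1 + n.-1 * n) :=
  row_mx (- Bux R n) (- Bvy R n).
Definition boldC (R : realType) (n : nat) :
  'M[R]_(n.-1 * n.-1, n * n.-1 + n.-1 * n) :=
  row_mx (- (Bqy R n)^T) ((Bqx R n)^T).

Definition AN (R : realType) (n : nat) : 'M[R]_(n * n.-1 + n.-1 * n) :=
  (boldB R n)^T *m boldB R n + (boldC R n)^T *m boldC R n.

(* Main.v *)
Require Import Defs.
From HB Require Import structures.
From mathcomp Require Import all_boot all_order all_algebra.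
From mathcomp Require Import reals.
From mathcomp Require Import zify.
From Stdlib Require Import ClassicalEpsilon.
Set Implicit Arguments. Unset Strict Implicit. Unset Printing Implicit Defensive.
Import Order.TTheory GRing.Theory Num.Theory.
Local Open Scope ring_scope.

Lemma kidx_lt m p (a : 'I_m) (b : 'I_p) : (a * p + b < m * p)%N.
Proof.
case: a b => a ha [b hb] /=.
have : (a.+1 * p <= m * p)%N by rewrite leq_mul2r ha orbT.
rewrite mulSn; lia.
Qed.

Definition kidx m p (a : 'I_m) (b : 'I_p) : 'I_(m * p) := Ordinal (kidx_lt a b).

Lemma kdiv_kidx m p (a : 'I_m) (b : 'I_p) : kdiv (kidx a b) = a.
Proof.
apply: val_inj => /=; case: b => b hb /=.
by rewrite divnMDl ?(leq_ltn_trans _ hb) // divn_small // addn0.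
Qed.

Lemma kmod_kidx m p (a : 'I_m) (b : 'I_p) : kmod (kidx a b) = b.
Proof.
apply: val_inj => /=; case: b => b hb /=.
by rewrite modnMDl modn_small.
Qed.

Lemma kidx_K m p (k : 'I_(m * p)) : kidx (kdiv k) (kmod k) = k.
Proof. by apply: val_inj => /=; rewrite -divn_eq. Qed.

Lemma kron_sum (R : nmodType) m p (F : 'I_(m * p) -> R) :
  \sum_k F k = \sum_(a < m) \sum_(b < p) F (kidx a b).
Proof.
rewrite pair_big /=.
rewrite (reindex (fun ab : 'I_m * 'I_p => kidx ab.1 ab.2)) //=.
exists (fun k => (kdiv k, kmod k)) => [[a b] _|k _] /=.
  by rewrite kdiv_kidx kmod_kidx.
by rewrite kidx_K.
Qed.

Section Kron.
Variable R : comPzRingType.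

Lemma kronE m1 n1 m2 n2 (A : 'M[R]_(m1, n1)) (B : 'M[R]_(m2, n2)) i j :
  kron A B i j = A (kdiv i) (kdiv j) * B (kmod i) (kmod j).
Proof. by rewrite mxE. Qed.

Lemma kron_mul m1 n1 m2 n2 p1 p2 (A : 'M[R]_(m1, n1)) (B : 'M[R]_(m2, n2))
  (C : 'M[R]_(n1, p1)) (D : 'M[R]_(n2, p2)) :
  kron A B *m kron C D = kron (A *m C) (B *m D).
Proof.
apply/matrixP => i j; rewrite kronE !mxE kron_sum big_distrl /=.
apply: eq_bigr => a _; rewrite big_distrr /=.
apply: eq_bigr => b _; rewrite !kronE kdiv_kidx kmod_kidx.
by rewrite mulrACA.
Qed.

Lemma kron_tr m1 n1 m2 n2 (A : 'M[R]_(m1, n1)) (B : 'M[R]_(m2, n2)) :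
  (kron A B)^T = kron A^T B^T.
Proof. by apply/matrixP => i j; rewrite mxE !kronE !mxE. Qed.

Lemma kron11 m p : kron (1%:M : 'M[R]_m) (1%:M : 'M[R]_p) = 1%:M.
Proof.
apply/matrixP => i j; rewrite kronE !mxE.
have [->|ne] := eqVneq i j; first by rewrite !eqxx mulr1.
case: (eqVneq (kdiv i) (kdiv j)) => e1; last by rewrite mul0r.
case: (eqVneq (kmod i) (kmod j)) => e2; last by rewrite mulr0.
by move: ne; rewrite -(kidx_K i) -(kidx_K j) e1 e2 eqxx.
Qed.

Lemma kronZl m1 n1 m2 n2 (c : R) (A : 'M[R]_(m1, n1)) (B : 'M[R]_(m2, n2)) :
  kron (c *: A) B = c *: kron A B.
Proof. by apply/matrixP => i j; rewrite /kron !mxE mulrA. Qed.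

Lemma kronZr m1 n1 m2 n2 (c : R) (A : 'M[R]_(m1, n1)) (B : 'M[R]_(m2, n2)) :
  kron A (c *: B) = c *: kron A B.
Proof. by apply/matrixP => i j; rewrite /kron !mxE mulrCA. Qed.

End Kron.
Section MP.
Variable R : realFieldType.
Variable N : nat.
Implicit Types P Q X Y : 'M[R]_N.

Lemma mp_orth P Q Y : P *m Q = 0 -> Q *m P = 0 -> Q^T = Q -> is_mp_pinv Q Y ->
  P *m Y = 0 /\ Y *m P = 0.
Proof.
move=> PQ QP QT [h1 h2 h3 h4]; split.
  rewrite -h2 -h4 trmx_mul QT !mulmxA PQ.
  by rewrite !mul0mx.
rewrite -h2 -[Y *m Q *m Y]mulmxA -h3 trmx_mul QT.
by rewrite -!mulmxA QP !mulmx0.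
Qed.

Lemma mp_ex P Q : P^T = P -> Q^T = Q -> P *m Q = 0 -> Q *m P = 0 ->
  (P + Q) \in unitmx -> is_mp_pinv P (mp_pinv P).
Proof.
move=> PT QT PQ QP uA.
rewrite /mp_pinv; apply: epsilon_spec.
set A := P + Q; set Z := invmx A.
have AP : A *m P = P *m P by rewrite mulmxDl QP addr0.
have PA : P *m A = P *m P by rewrite mulmxDr PQ addr0.
have AZ : A *m Z = 1%:M by rewrite mulmxV.
have ZA : Z *m A = 1%:M by rewrite mulVmx.
have ZP : Z *m P = P *m Z.
  rewrite -[Z *m P]mulmx1 -AZ !mulmxA -[Z *m P *m A]mulmxA PA -AP.
  by rewrite !mulmxA ZA mul1mx.
have E1 : P *m Z *m P = P.
  by rewrite -mulmxA ZP mulmxA -PA -mulmxA AZ mulmx1.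
have ZT : Z^T = Z by rewrite /Z trmx_inv linearD /= PT QT.
have E2 : Z *m P *m Z *m P = Z *m P.
  by rewrite -!mulmxA [P *m (Z *m P)]mulmxA E1.
exists (Z *m P *m Z); split.
- by rewrite !mulmxA E1 E1.
- by rewrite !mulmxA E2 E2.
- by rewrite !mulmxA E1 trmx_mul ZT PT ZP.
- by rewrite E2 trmx_mul ZT PT ZP.
Qed.

Lemma mp_sum P Q : P^T = P -> Q^T = Q -> P *m Q = 0 -> Q *m P = 0 ->
  (P + Q) \in unitmx -> invmx (P + Q) = mp_pinv P + mp_pinv Q.
Proof.
move=> PT QT PQ QP uA.
have hX := mp_ex PT QT PQ QP uA.
have uA' : (Q + P) \in unitmx by rewrite addrC.
have hY := mp_ex QT PT QP PQ uA'.
have [PY YP] := mp_orth PQ QP QT hY.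
have [QX XQ] := mp_orth QP PQ PT hX.
set X := mp_pinv P in hX PY YP QX XQ *; set Y := mp_pinv Q in hY PY YP QX XQ *.
case: hX => X1 _ _ _; case: hY => Y1 _ _ _.
set A := P + Q.
have AWA : A *m (X + Y) *m A = A.
  rewrite /A !mulmxDr !mulmxDl PY QX X1 Y1 -!mulmxA XQ YP !mulmx0 !mul0mx.
  by rewrite !addr0 !add0r.
have -> : X + Y = invmx A *m A *m (X + Y) *m A *m invmx A.
  by rewrite mulVmx // mul1mx -mulmxA mulmxV // mulmx1.
have -> : invmx A *m A *m (X + Y) *m A *m invmx A =
   invmx A *m (A *m (X + Y) *m A) *m invmx A by rewrite !mulmxA.
by rewrite AWA -mulmxA mulmxV // mulmx1.
Qed.
End MP.
Section Sq.
Variable R : realFieldType.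

Lemma sqnE k (y : 'cV[R]_k) : (y^T *m y) 0 0 = \sum_i y i 0 ^+ 2.
Proof. by rewrite mxE; apply: eq_bigr => i _; rewrite mxE expr2. Qed.

Lemma sqn_ge0 k (y : 'cV[R]_k) : 0 <= (y^T *m y) 0 0.
Proof. by rewrite sqnE sumr_ge0 // => i _; rewrite sqr_ge0. Qed.

Lemma sqn_eq0 k (y : 'cV[R]_k) : (y^T *m y) 0 0 = 0 -> y = 0.
Proof.
rewrite sqnE => h; apply/matrixP => i j; rewrite ord1 mxE.
have := @psumr_eq0P _ _ _ _ (fun i _ => sqr_ge0 (y i 0)) h i isT.
by move/eqP; rewrite sqrf_eq0 => /eqP.
Qed.

Lemma sum_if N (k : nat) (F : 'I_N -> R) (hk : (k < N)%N) :
  \sum_(i < N) (if (i : nat) == k then F i else 0) = F (Ordinal hk).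
Proof.
rewrite (bigD1 (Ordinal hk)) //= eqxx big1 ?addr0 // => i hi.
case: eqP => // e; case/eqP: hi; exact: val_inj.
Qed.
End Sq.

Section Concrete.
Variable R : realType.
Variable n : nat.

Definition Tmat : 'M[R]_(n, n.-1) := \matrix_(i, j) ((i <= j)%N)%:R.

Lemma MtT : (Mmat R n)^T *m Tmat = 1%:M.
Proof.
apply/matrixP => k j; rewrite !mxE.
have hk : (k < n)%N by have := ltn_ord k; lia.
have hk1 : (k.+1 < n)%N by have := ltn_ord k; lia.
transitivity (\sum_(i < n) ((if (i : nat) == k then ((k <= j)%N)%:R else 0) +
   (if (i : nat) == k.+1 then - ((k.+1 <= j)%N)%:R else 0)) : R).
  apply: eq_bigr => i _; rewrite !mxE.
  case: (eqVneq (i : nat) k) => [->|ne].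
    by rewrite mul1r (_ : (k == k.+1 :> nat) = false) ?addr0 //; lia.
  case: (eqVneq (i : nat) k.+1) => [->|ne1]; last by rewrite mul0r add0r.
  by rewrite add0r mulN1r.
rewrite big_split /= (sum_if (fun _ => ((k <= j)%N)%:R : R) hk).
rewrite (sum_if (fun _ => - ((k.+1 <= j)%N)%:R : R) hk1) /=.
case: (ltngtP k j) => h.
- have -> : (k == j) = false by apply/eqP => e; move: h; rewrite e ltnn.
  by rewrite subrr.
- have -> : (k == j) = false by apply/eqP => e; move: h; rewrite e ltnn.
  by rewrite subrr.
- have -> : (k == j) by apply/eqP/val_inj.
  by rewrite subr0.
Qed.


Lemma scal0 m p (c : R) (A : 'M[R]_(m, p)) : c != 0 -> c *: A = 0 -> A = 0.
Proof. by move=> cn h; rewrite -[A]scale1r -(mulVf cn) -scalerA h scaler0. Qed.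

Lemma BCt0 : boldB R n *m (boldC R n)^T = 0.
Proof.
rewrite /boldB /boldC tr_row_mx mul_row_col linearN /= !trmxK mulNmx mulmxN opprK mulNmx.
by rewrite /Bux /Bqy /Bvy /Bqx !kron_mul !mul1mx !mulmx1 subrr.
Qed.

Lemma AN_inj (hn : (0 < n)%N) (x : 'cV[R]_(n * n.-1 + n.-1 * n)) :
  AN R n *m x = 0 -> x = 0.
Proof.
move=> Ax.
set B := boldB R n; set C := boldC R n.
have e : x^T *m AN R n *m x = (B *m x)^T *m (B *m x) + (C *m x)^T *m (C *m x).
  by rewrite /AN mulmxDr mulmxDl !trmx_mul !mulmxA.
have : (B *m x)^T *m (B *m x) + (C *m x)^T *m (C *m x) = 0.
  by rewrite -e -mulmxA Ax mulmx0.
move/(congr1 (fun M : 'M[R]_1 => M 0 0)).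
rewrite [X in X = _]mxE [X in _ = X]mxE => /eqP.
rewrite paddr_eq0 ?sqn_ge0 // => /andP [/eqP /sqn_eq0 Bx0 /eqP /sqn_eq0 Cx0].
pose c := (hstep R n)^-1.
have cnz : c != 0 by rewrite /c /hstep invr_eq0 mul1r invr_eq0 pnatr_eq0 -lt0n.
set M := Mmat R n; set Mt := M^T; set T := Tmat.
set u := usubmx x; set v := dsubmx x.
have xe : x = col_mx u v by rewrite vsubmxK.
have divB : kron (1%:M : 'M_n) M *m u + kron M (1%:M : 'M_n) *m v = 0.
  have : B *m col_mx u v = - (c *: (kron (1%:M : 'M_n) M *m u + kron M (1%:M : 'M_n) *m v)).
    by rewrite /B /boldB mul_row_col /Bux /Bvy /Bmat kronZr kronZl !mulNmx -!scalemxAl scalerDr opprD.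
  rewrite -xe Bx0 => /eqP; rewrite eq_sym oppr_eq0 => /eqP; exact: scal0.
have curl : kron (1%:M : 'M_n.-1) Mt *m v = kron Mt (1%:M : 'M_n.-1) *m u.
  have : C *m col_mx u v = c *: (kron (1%:M : 'M_n.-1) Mt *m v - kron Mt (1%:M : 'M_n.-1) *m u).
    rewrite /C /boldC mul_row_col /Bqy /Bqx /Bmat kronZr kronZl !linearZ /= !kron_tr !trmx1.
    by rewrite -!scalemxAl mulNmx -scalerDr addrC.
  rewrite -xe Cx0 => /esym /(scal0 cnz) /eqP; rewrite subr_eq0 => /eqP //.
pose phi := kron (1%:M : 'M_n) T *m u + kron T (1%:M : 'M_n) *m v
            - kron (T *m Mt) T *m u.
have hu : kron (1%:M : 'M_n) Mt *m phi = u.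
  rewrite /phi mulmxBr mulmxDr !mulmxA !kron_mul !mul1mx !mulmx1 MtT kron11 mul1mx.
  have -> : kron T Mt = kron T (1%:M : 'M_n.-1) *m kron (1%:M : 'M_n.-1) Mt.
    by rewrite kron_mul mul1mx mulmx1.
  have -> : kron (T *m Mt) (1%:M : 'M_n.-1) =
            kron T (1%:M : 'M_n.-1) *m kron Mt (1%:M : 'M_n.-1).
    by rewrite kron_mul mul1mx.
  by rewrite -!mulmxA curl addrK.
have hv : kron Mt (1%:M : 'M_n) *m phi = v.
  rewrite /phi mulmxBr mulmxDr !mulmxA !kron_mul !mul1mx !mulmx1 MtT kron11 mul1mx.
  by rewrite mulmxA MtT mul1mx [_ + v]addrC addrK.
pose G := col_mx (kron (1%:M : 'M_n) Mt) (kron Mt (1%:M : 'M_n)).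
have xG : x = G *m phi by rewrite /G mul_col_mx hu hv.
have Gx : G^T *m x = 0.
  by rewrite /G tr_col_mx !kron_tr !trmx1 /Mt trmxK xe mul_row_col.
apply: sqn_eq0.
by rewrite {1}xG trmx_mul -mulmxA Gx mulmx0 mxE.
Qed.

End Concrete.

Theorem corollary1 (R : realType) (n : nat) (hn : (2 <= n)%N) :
  AN R n \in unitmx /\
  invmx (AN R n) =
    mp_pinv ((boldB R n)^T *m boldB R n) + mp_pinv ((boldC R n)^T *m boldC R n).
Proof.
have uA : AN R n \in unitmx.
  rewrite -row_free_unit -kermx_eq0; apply/rowV0P => w /sub_kermxP wA.
  have sym : (AN R n)^T = AN R n by rewrite /AN linearD /= !trmx_mul !trmxK.
  have : AN R n *m w^T = 0 by rewrite -sym -trmx_mul wA trmx0.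
  move/(AN_inj (ltnW hn))/(congr1 trmx); by rewrite trmxK trmx0.
split => //; move: uA; rewrite /AN => uA.
have BC := BCt0 R n.
have CB : boldC R n *m (boldB R n)^T = 0 by rewrite -[LHS]trmxK trmx_mul trmxK BC trmx0.
apply: mp_sum => //.
- by rewrite trmx_mul trmxK.
- by rewrite trmx_mul trmxK.
- by rewrite -mulmxA (mulmxA (boldB R n)) BC mul0mx mulmx0.
- by rewrite -mulmxA (mulmxA (boldC R n)) CB mul0mx mulmx0.
Qed.
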